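(* There exists an approval-based SCV instance with exactly two candidate subsets and quotas $k_1=k_2=1$ for which no committee satisfies Span-wise Justified Representation (SW-JR).
   Context: An approval-based sub-committee voting (SCV) instance consists of a set of voters $N=\{1,\ldots,n\}$, a finite set of candidates $C$ partitioned into candidate subsets $C_1,\ldots,C_\ell$, positive integer quotas $k_j\le |C_j|$ for $j=1,\ldots,\ell$ with $k=\sum_{j=1}^\ell k_j$, and an approval ballot $A_i\subseteq C$ for each voter $i\in N$. A committee is a set $W\subseteq C$ with $|W\cap C_j|=k_j$ for every $j$ (so $|W|=k$). A committee $W$ satisfies SW-JR if for every $X\subseteq N$ with $|X|\ge n/k$ and $|\bigcap_{i\in X}A_i|\ge 1$ we have $|W\cap \bigcup_{i\in X}A_i|\ge 1$. *)

(* Defs.v *)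
From mathcomp Require Import all_boot.
Set Implicit Arguments. Unset Strict Implicit. Unset Printing Implicit Defensive.

(* Voters: finite type V (N = V, n = #|V|); candidates: finite type Cd (C = Cd);
   candidate subsets C_1..C_l given by a labelling  part : Cd -> 'I_l
   (C_j = [set c | part c == j]); quotas  k : 'I_l -> nat;
   ballots  A : V -> {set Cd}. *)

Definition block (Cd : finType) (l : nat) (part : Cd -> 'I_l) (j : 'I_l) : {set Cd} :=
  [set c | part c == j].

Definition scv_instance (V Cd : finType) (l : nat) (part : Cd -> 'I_l)
    (k : 'I_l -> nat) : Prop :=
  0 < #|V| /\ forall j : 'I_l, 0 < k j /\ k j <= #|block part j|.

Definition total_quota (l : nat) (k : 'I_l -> nat) : nat := \sum_(j < l) k j.

Definition committee (Cd : finType) (l : nat) (part : Cd -> 'I_l)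
    (k : 'I_l -> nat) (W : {set Cd}) : Prop :=
  forall j : 'I_l, #|W :&: block part j| = k j.

(* SW-JR: for every X ⊆ N with |X| >= n/k and |∩_{i∈X} A_i| >= 1,
   |W ∩ ∪_{i∈X} A_i| >= 1.  Since k > 0, |X| >= n/k  <=>  n <= |X| * k. *)
Definition SW_JR (V Cd : finType) (l : nat) (k : 'I_l -> nat)
    (A : V -> {set Cd}) (W : {set Cd}) : Prop :=
  forall X : {set V},
    #|V| <= #|X| * total_quota k ->
    1 <= #|\bigcap_(i in X) A i| ->
    1 <= #|W :&: \bigcup_(i in X) A i|.

(* Main.v *)
Require Import Defs.
From mathcomp Require Import all_boot.

Definition prt (c : 'I_3) : 'I_2 := if (c < 2)%N then ord0 else ord_max.
Definition Ab (i : 'I_2) : {set 'I_3} := [set inord i].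

Lemma hit (W : {set 'I_3}) (i : 'I_2) :
  1 <= #|W :&: \bigcup_(x in [set i]) Ab x| -> (inord i : 'I_3) \in W.
Proof.
rewrite big_set1 card_gt0 => /set0Pn [y]; rewrite inE /Ab inE.
by case/andP=> yW /eqP <-.
Qed.

Theorem mainTheorem1 :
  exists (n m : nat) (part : 'I_m -> 'I_2) (A : 'I_n -> {set 'I_m}),
    let k := fun _ : 'I_2 => 1%N in
    @scv_instance 'I_n 'I_m 2 part k /\
    forall W : {set 'I_m}, committee part k W -> ~ SW_JR k A W.
Proof.
exists 2, 3, prt, Ab => k; split.
  split; first by rewrite card_ord.
  move=> j; split=> //; rewrite card_gt0; apply/set0Pn.
  case: j => [[|[|//]] Hj].
    by exists (inord 0); rewrite inE /prt inordK //; apply/eqP/val_inj.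
  by exists (inord 2); rewrite inE /prt inordK //; apply/eqP/val_inj.
move=> W HW HS.
have Hq : total_quota k = 2 by rewrite /total_quota big_ord_recr big_ord_recr big_ord0.
have H1 : forall i : 'I_2, 1 <= #|W :&: \bigcup_(x in [set i]) Ab x| -> (inord i : 'I_3) \in W.
  exact: hit.
have HX : forall i : 'I_2, 1 <= #|W :&: \bigcup_(x in [set i]) Ab x|.
  move=> i; apply: HS; first by rewrite Hq cards1 card_ord.
  by rewrite big_set1 /Ab cards1.
have h0 := H1 ord0 (HX ord0).
have h1 := H1 ord_max (HX ord_max).
have := HW ord0.
have sub : [set (inord 0 : 'I_3); inord 1] \subset W :&: block prt ord0.
  apply/subsetP=> x; rewrite !inE => /orP [] /eqP ->; rewrite /prt inordK //= andbT; [exact: h0 | exact: h1].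
have := subset_leq_card sub.
rewrite cards2.
have -> : ((inord 0 : 'I_3) != inord 1).
  by apply/negP=> /eqP /(congr1 (@nat_of_ord 3)); rewrite !inordK.
by move=> /= le eq; rewrite eq in le.
Qed.
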